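(* The Sierpiński gasket iterated graph system and the pentagonal Sierpiński carpet iterated graph system are of bounded geometry.
   Context: Graphs: $(V,E)$, $V$ finite non-empty, $E\subseteq V\times V$, $(x,y)\in E\Rightarrow(y,x)\notin E$; $\{x,y\}\in E$ means either orientation; a path is a sequence $[x_1,\dots,x_k]$ ($k\ge1$) with $\{x_i,x_{i+1}\}\in E$, of length $k-1$; $d_G$ is the path metric. An iterated graph system $\mathfrak R$ consists of a connected graph $G_1=(S,E)$, a finite set $\mathcal T$ of types, a surjective typing $\mathfrak t:E\to\mathcal T$ and non-empty gluing rules $I_t\subseteq S\times S$. With $W_m=S^m$, $W_\#=\bigcup_{m\ge1}W_m$, $[w]_k=w_1\cdots w_k$, the replacement graphs $G_m=(W_m,E_m)$ are defined recursively: $(w,v)\in E_{m+1}$ iff either (1) $[w]_m=[v]_m$ and $(w_{m+1},v_{m+1})\in E$ (type $\mathfrak t(w_{m+1},v_{m+1})$), or (2) $([w]_m,[v]_m)\in E_m$ and $(w_{m+1},v_{m+1})\in I_{\mathfrak t([w]_m,[v]_m)}$ (type $\mathfrak t([w]_m,[v]_m)$). For $n\ge k$, $\pi_{n,k}$ maps a path of $G_n$ to the path of $G_k$ obtained by replacing each vertex $w$ by $[w]_k$ and deleting consecutive repetitions. A path $\theta$ in $G_m$ is an intersection path if there are paths $\theta_n$ in $G_n$ ($n\in\mathbb N$) with $\theta_m=\theta$, $\pi_{n,k}(\theta_n)=\theta_k$ for all $n>k$, and $\lim_n\operatorname{len}(\theta_n)<\infty$. $\mathcal N(w)=\{v\in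 W_{|w|}:$ there is an intersection path from $w$ to $v\}$; $\mathfrak R$ is of bounded geometry if $\sup_{w\in W_\#}\operatorname{diam}_{d_{G_{|w|}}}(\mathcal N(w))<\infty$. Sierpiński gasket: $S=\{0,1,2\}$, $E=\{(0,1),(1,2),(0,2)\}$ of types $a,b,c$ respectively, $I_a=\{(1,0)\}$, $I_b=\{(2,1)\}$, $I_c=\{(2,0)\}$. Pentagonal Sierpiński carpet: $S=\{0,1,2,3,4\}$, $E=\{(0,1),(1,2),(2,3),(3,4),(4,0)\}$ of types $a,b,c,d,e$ respectively, $I_a=\{(1,0),(2,4)\}$, $I_b=\{(2,1),(3,0)\}$, $I_c=\{(3,2),(4,1)\}$, $I_d=\{(4,3),(0,2)\}$, $I_e=\{(0,4),(1,3)\}$. *)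

(* Defs.v *)
From mathcomp Require Import all_boot.
Set Implicit Arguments. Unset Strict Implicit. Unset Printing Implicit Defensive.

(* An iterated graph system is given by a finite vertex set S, a finite set of
   types T, a directed edge relation E on S, a typing ty (only its values on
   edges of E matter) and gluing rules I t (a relation on S for each type t).
   Words of W_m are sequences over S of size m; [w]_k = take k w. *)
Section IGS.
Variables (S T : finType) (E : rel S) (ty : S -> S -> T) (I : T -> rel S).

Definition is_igs : Prop :=
  [/\ (forall x y, E x y -> ~~ E y x),
      (forall x y, connect (fun a b => E a b || E b a) x y),
      (forall t, exists x y, E x y && (ty x y == t))
    & (forall t, exists x y, I t x y)].

(* etype m w v = Some t iff (w,v) is an edge of E_m (w, v of size m) of type t.
   E_0 is empty, so E_1 consists of the edges of case (1), i.e. a copy of E. *)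
Fixpoint etype (m : nat) (w v : seq S) : option T :=
  match m with
  | 0 => None
  | m'.+1 =>
    match drop m' w, drop m' v with
    | [:: a], [:: b] =>
      if take m' w == take m' v then (if E a b then Some (ty a b) else None)
      else match etype m' (take m' w) (take m' v) with
           | Some t => if I t a b then Some t else None
           | None => None
           end
    | _, _ => None
    end
  end.

Definition edge (m : nat) (w v : seq S) : bool := etype m w v != None.

Definition adj (m : nat) (w v : seq S) : bool := edge m w v || edge m v w.

Definition is_path (m : nat) (p : seq (seq S)) : bool :=
  if p is x :: q then all (fun u => size u == m) p && path (adj m) x q
  else false.

Definition plen (p : seq (seq S)) : nat := (size p).-1.

Fixpoint compress (s : seq (seq S)) : seq (seq S) :=
  match s with
  | x :: ((y :: _) as t) => if x == y then compress t else x :: compress t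
  | _ => s
  end.

Definition proj (k : nat) (p : seq (seq S)) : seq (seq S) :=
  compress (map (take k) p).

(* theta is an intersection path in G_m; lim_n len(theta_n) < oo is stated as
   convergence of the nat-valued sequence to a finite value, i.e. eventual
   constancy *)
Definition is_intersection_path (m : nat) (theta : seq (seq S)) : Prop :=
  0 < m /\
  exists th : nat -> seq (seq S),
    [/\ th m = theta,
        (forall n, 0 < n -> is_path n (th n)),
        (forall n k, 0 < k -> k < n -> proj k (th n) = th k)
      & exists L N, forall n, N <= n -> plen (th n) = L].

Definition in_nbhd (w v : seq S) : Prop :=
  exists q, is_intersection_path (size w) (w :: q) /\ last w q = v.

Definition dist_le (m : nat) (x y : seq S) (D : nat) : Prop :=
  exists q, is_path m (x :: q) /\ last x q = y /\ size q <= D.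

Definition bounded_geometry : Prop :=
  exists D : nat, forall w : seq S, 0 < size w ->
    forall v1 v2, in_nbhd w v1 -> in_nbhd w v2 -> dist_le (size w) v1 v2 D.

End IGS.

(* ---------- Sierpinski gasket: S = {0,1,2}, types a,b,c = 0,1,2 ---------- *)
Definition gasketE (x y : 'I_3) : bool :=
  ((x : nat), (y : nat)) \in [:: (0, 1); (1, 2); (0, 2)].
Definition gasketTy (x y : 'I_3) : 'I_3 :=
  if ((x : nat), (y : nat)) == (0, 1) then @Ordinal 3 0 isT
  else if ((x : nat), (y : nat)) == (1, 2) then @Ordinal 3 1 isT
  else @Ordinal 3 2 isT.
Definition gasketI (t : 'I_3) (x y : 'I_3) : bool :=
  ((x : nat), (y : nat)) \in nth [::] [:: [:: (1, 0)]; [:: (2, 1)]; [:: (2, 0)]] t.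

(* ---------- pentagonal Sierpinski carpet: S = {0,..,4}, types a..e = 0..4 -- *)
Definition carpetE (x y : 'I_5) : bool :=
  ((x : nat), (y : nat)) \in [:: (0, 1); (1, 2); (2, 3); (3, 4); (4, 0)].
(* the edge (i, i+1 mod 5) has type i *)
Definition carpetTy (x y : 'I_5) : 'I_5 := x.
Definition carpetI (t : 'I_5) (x y : 'I_5) : bool :=
  ((x : nat), (y : nat)) \in
    nth [::] [:: [:: (1, 0); (2, 4)]; [:: (2, 1); (3, 0)]; [:: (3, 2); (4, 1)];
                 [:: (4, 3); (0, 2)]; [:: (0, 4); (1, 3)]] t.

(* Main.v *)
Require Import Defs.
From mathcomp Require Import all_boot zify.
Set Implicit Arguments. Unset Strict Implicit. Unset Printing Implicit Defensive.

Section Gen.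
Variables (S T : finType) (E : rel S) (ty : S -> S -> T) (I : T -> rel S).
Notation et := (etype E ty I).

Lemma et_size n w v t : et n w v = Some t -> size w = n /\ size v = n.
Proof.
case: n => [//|n] /=.
case Dw: (drop n w) => [|a [|]] //; case Dv: (drop n v) => [|b [|]] //.
move=> _; move: (congr1 size Dw) (congr1 size Dv); rewrite !size_drop /=.
by move=> h1 h2; split; lia.
Qed.

Lemma et_rcons n x y a b : size x = n -> size y = n ->
  et n.+1 (rcons x a) (rcons y b) =
  if x == y then (if E a b then Some (ty a b) else None)
  else match et n x y with Some t => if I t a b then Some t else None | None => None end.
Proof.
move=> hx hy /=.
have e1 : drop n (x ++ [:: a]) = [:: a] by rewrite -hx drop_size_cat.
have e2 : drop n (y ++ [:: b]) = [:: b] by rewrite -hy drop_size_cat.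
have e3 : take n (x ++ [:: a]) = x by rewrite -hx take_size_cat.
have e4 : take n (y ++ [:: b]) = y by rewrite -hy take_size_cat.
by rewrite -!cats1 e1 e2 e3 e4.
Qed.


Definition port := (T * bool)%type.
Definition Ip (P : port) a b := if P.2 then I P.1 a b else I P.1 b a.
Definition opp (P : port) : port := (P.1, ~~ P.2).
Definition Pt n x (P : port) y := if P.2 then et n x y == Some P.1 else et n y x == Some P.1.
Definition IntPt j (P : port) k := if P.2 then E j k && (ty j k == P.1) else E k j && (ty k j == P.1).
Definition Yp P a := [exists b, Ip P a b].
Definition Int j c k d := [exists P : port, IntPt j P k && Ip P c d].
Definition W n x c y d := [exists P : port, Pt n x P y && Ip P c d].

Lemma Pt_size n x P y : Pt n x P y -> size x = n /\ size y = n.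
Proof.
rewrite /Pt; case: ifP => _ /eqP /et_size //; by case.
Qed.

Lemma rconsP n (X : seq S) : size X = n.+1 -> exists x j, X = rcons x j /\ size x = n.
Proof.
case/lastP: X => [//|x j]; rewrite size_rcons => -[h]; by exists x, j.
Qed.

Lemma Pt_rcons n x y j k P : size x = n -> size y = n ->
  Pt n.+1 (rcons x j) P (rcons y k) = if x == y then IntPt j P k else Pt n x P y && Ip P j k.
Proof.
move=> hx hy; rewrite /Pt /IntPt /Ip !et_rcons //; case: P => t [] /=.
- case: (x == y); first by case: (E j k).
case: (et n x y) => [t'|] //=; case: (t' =P t) => [->|ne]; first by case: (I t j k); rewrite ?eqxx.
  have h : (Some t' == Some t) = false by apply/eqP => -[].
  by rewrite h; case: (I t' j k) => //=; rewrite h.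
- rewrite (eq_sym y x); case: (x == y); first by case: (E k j).
case: (et n y x) => [t'|] //=; case: (t' =P t) => [->|ne]; first by case: (I t k j); rewrite ?eqxx.
  have h : (Some t' == Some t) = false by apply/eqP => -[].
  by rewrite h; case: (I t' k j) => //=; rewrite h.
Qed.

Lemma W_rcons n x y j k c d : size x = n -> size y = n ->
  W n.+1 (rcons x j) c (rcons y k) d =
  if x == y then Int j c k d else [exists P : port, Pt n x P y && Ip P j k && Ip P c d].
Proof.
move=> hx hy; rewrite /W /Int; case: ifP => e.
- by apply: eq_existsb => P; rewrite Pt_rcons // e.
- by apply: eq_existsb => P; rewrite Pt_rcons // e.
Qed.

Lemma Pt_opp n x P y : Pt n x P y = Pt n y (opp P) x.
Proof. by rewrite /Pt /opp; case: P => t []. Qed.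

Lemma Ip_opp P a b : Ip P a b = Ip (opp P) b a.
Proof. by rewrite /Ip /opp; case: P => t []. Qed.

Hypothesis Hirr : forall a, ~~ E a a.
Hypothesis Hfun : forall P a b b', Ip P a b -> Ip P a b' -> b = b'.
Hypothesis HintU : forall j P k k', IntPt j P k -> IntPt j P k' -> k = k'.
Hypothesis Hmix : forall j P k k', IntPt j P k -> Ip P j k' -> False.
Hypothesis HPS1 : forall j P Q k k', IntPt j P k -> IntPt j Q k' -> P != Q ->
  forall u v, u != v -> Yp P u -> Yp P v -> Yp Q u -> Yp Q v -> False.
Hypothesis HPS2 : forall j P Q k, IntPt j P k -> Yp Q j ->
  forall u v, u != v -> Yp P u -> Yp P v -> Yp Q u -> Yp Q v -> False.
Hypothesis HA1 : forall j k d, ~~ Int j j k d.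
Hypothesis HB1 : forall j c k d, Int j c k d -> d = k -> c = j.
Hypothesis HB2 : forall j c k d R, Int j c k d -> j != c -> Yp R j -> Yp R c -> Yp R k && Yp R d.

Lemma et_refl n x : et n x x = None.
Proof.
case: n => [//|n].
case E1: (et n.+1 x x) => [t|] //; have [hs _] := et_size E1.
have [x' [a [ex hx']]] := rconsP hs.
by move: E1; rewrite ex et_rcons // eqxx (negbTE (Hirr a)).
Qed.

Lemma Pt_neq n x P y : Pt n x P y -> x != y.
Proof.
move=> h; apply/eqP => exy; subst y; move: h; rewrite /Pt et_refl; by case: ifP.
Qed.

Definition Uniq n := forall x P y y', Pt n x P y -> Pt n x P y' -> y = y'.
Definition PSn n := forall x P Q y z, Pt n x P y -> Pt n x Q z -> P != Q ->
  forall u v, u != v -> Yp P u -> Yp P v -> Yp Q u -> Yp Q v -> False.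

Lemma YpI P a b : Ip P a b -> Yp P a.
Proof. by move=> h; apply/existsP; exists b. Qed.

Lemma inv_step n : Uniq n -> PSn n -> Uniq n.+1 /\ PSn n.+1.
Proof.
move=> U PS; split.
- move=> X P Y Y' h1 h2.
  have [hX hY] := Pt_size h1; have [_ hY'] := Pt_size h2.
  have [x [j [ex hx]]] := rconsP hX; subst; have [y [k [ey hy]]] := rconsP hY; subst.
  have [y' [k' [ey' hy']]] := rconsP hY'; subst.
  move: h1 h2; rewrite !Pt_rcons //.
  case: (x =P y) => [e1|nxy]; case: (x =P y') => [e2|nxy']; subst.
  + by move=> a b; rewrite (HintU a b).
  + by move=> a /andP [_ b]; case: (Hmix a b).
  + by move=> /andP [_ b] a; case: (Hmix a b).
  + move=> /andP [a1 a2] /andP [b1 b2].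
    by rewrite (U _ _ _ _ a1 b1) (Hfun a2 b2).
- move=> X P Q Y Z h1 h2 nPQ u v nuv.
  have [hX hY] := Pt_size h1; have [_ hZ] := Pt_size h2.
  have [x [j [ex hx]]] := rconsP hX; subst; have [y [k [ey hy]]] := rconsP hY; subst.
  have [z [k' [ez hz]]] := rconsP hZ; subst.
  move: h1 h2; rewrite !Pt_rcons //.
  case: (x =P y) => [e1|nxy]; case: (x =P z) => [e2|nxz]; subst.
  + by move=> a b; apply: (HPS1 a b nPQ nuv).
  + move=> a /andP [_ b]; exact: (HPS2 a (YpI b) nuv).
  + move=> /andP [_ b] a Pu Pv Qu Qv; exact: (HPS2 a (YpI b) nuv Qu Qv Pu Pv).
  + move=> /andP [a1 _] /andP [b1 _]; exact: (PS _ _ _ _ _ a1 b1 nPQ _ _ nuv).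
Qed.


Definition W2 n x c y d := (x = y /\ c = d) \/ W n x c y d \/ exists z e, W n x c z e /\ W n z e y d.
Definition Claim n := forall x0 c0 x1 c1 x2 c2 x3 c3, W n x0 c0 x1 c1 -> W n x1 c1 x2 c2 ->
  W n x2 c2 x3 c3 -> W2 n x0 c0 x3 c3.

Lemma W_size n x c y d : W n x c y d -> size x = n /\ size y = n.
Proof. by case/existsP => P /andP [/Pt_size]. Qed.

Lemma stepA n x y j k d : size x = n -> size y = n ->
  W n.+1 (rcons x j) j (rcons y k) d -> d = k /\ W n x j y k.
Proof.
move=> hx hy; rewrite W_rcons //; case: ifP => _; first by rewrite (negbTE (HA1 _ _ _)).
case/existsP => P /andP [/andP [h1 h2] h3]; have e := Hfun h2 h3; subst; split=> //.
by apply/existsP; exists P; rewrite h1 h2.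
Qed.

Lemma liftA n x y j k : W n x j y k -> W n.+1 (rcons x j) j (rcons y k) k.
Proof.
move=> h; have [hx hy] := W_size h; rewrite W_rcons //.
case/existsP: h => P /andP [h1 h2]; rewrite (negbTE (Pt_neq h1)).
by apply/existsP; exists P; rewrite h1 h2.
Qed.

Lemma Ip_ne P j k c d : Ip P j k -> Ip P c d -> c != j -> d != k.
Proof.
move=> h1 h2; apply: contra => /eqP edk; subst d.
rewrite Ip_opp in h1; rewrite Ip_opp in h2.
by rewrite (Hfun h2 h1).
Qed.

Definition mstate := (bool * S * S)%type.
Definition Mstep (oP : option port) (s s' : mstate) : bool :=
  let: (b, j, c) := s in let: (b', k, d) := s' in
  if b == b' then Int j c k d else
  match oP with None => false | Some P => if b then Ip P k j && Ip P d c else Ip P j k && Ip P c d end.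

Hypothesis HM : forall oP s0 s1 s2 s3, s0.2 != s0.1.2 -> Mstep oP s0 s1 -> Mstep oP s1 s2 ->
  Mstep oP s2 s3 -> s0 = s3 \/ Mstep oP s0 s3 \/ exists s, Mstep oP s0 s && Mstep oP s s3.

Definition emb x y (s : mstate) : seq S := rcons (if s.1.1 then y else x) s.1.2.

Lemma Msound n oP x y s s' : size x = n -> size y = n -> (forall P, oP = Some P -> Pt n x P y) ->
  Mstep oP s s' -> W n.+1 (emb x y s) s.2 (emb x y s') s'.2.
Proof.
move=> hx hy hP; case: s s' => [[b j] c] [[b' k] d]; rewrite /Mstep /emb /=.
case: (b =P b') => [<-|nb].
  by move=> h; rewrite W_rcons; [rewrite eqxx | case: b | case: b].
case: oP hP => [P|//] hP; have hPt := hP P erefl; have nxy := Pt_neq hPt.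
case: b b' nb => [] [] // _.
- rewrite W_rcons // eq_sym (negbTE nxy) => /andP [a1 a2].
  by apply/existsP; exists (opp P); rewrite -Pt_opp hPt -!Ip_opp a1 a2.
- rewrite W_rcons // (negbTE nxy) => /andP [a1 a2].
  by apply/existsP; exists P; rewrite hPt a1 a2.
Qed.

Lemma finish n oP x y s0 s1 s2 s3 : size x = n -> size y = n ->
  (forall P, oP = Some P -> Pt n x P y) -> s0.2 != s0.1.2 ->
  Mstep oP s0 s1 -> Mstep oP s1 s2 -> Mstep oP s2 s3 ->
  W2 n.+1 (emb x y s0) s0.2 (emb x y s3) s3.2.
Proof.
move=> hx hy hP ne a1 a2 a3.
case: (HM ne a1 a2 a3) => [->|[h|[s /andP [b1 b2]]]]; first by left; split.
  by right; left; apply: (Msound hx hy hP h).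
by right; right; exists (emb x y s), s.2; split; [apply: (Msound hx hy hP b1) | apply: (Msound hx hy hP b2)].
Qed.

Lemma finishN n x s0 s1 s2 s3 : size x = n -> s0.2 != s0.1.2 ->
  Mstep None s0 s1 -> Mstep None s1 s2 -> Mstep None s2 s3 ->
  W2 n.+1 (emb x x s0) s0.2 (emb x x s3) s3.2.
Proof.
move=> hx ne m1 m2 m3; have hP : forall P, None = Some P -> Pt n x P x by [].
exact: (finish hx hx hP ne m1 m2 m3).
Qed.

Lemma finishS n P x y s0 s1 s2 s3 : Pt n x P y -> s0.2 != s0.1.2 ->
  Mstep (Some P) s0 s1 -> Mstep (Some P) s1 s2 -> Mstep (Some P) s2 s3 ->
  W2 n.+1 (emb x y s0) s0.2 (emb x y s3) s3.2.
Proof.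
move=> hP ne m1 m2 m3; have [hx hy] := Pt_size hP.
have hP' : forall P', Some P = Some P' -> Pt n x P' y by move=> P' [<-].
exact: (finish hx hy hP' ne m1 m2 m3).
Qed.

Definition inv P (s : mstate) :=
  (s.1.2 != s.2) && (if s.1.1 then Yp (opp P) s.1.2 && Yp (opp P) s.2 else Yp P s.1.2 && Yp P s.2).

Lemma inv_glue P j k c d : Ip P j k -> Ip P c d -> c != j -> inv P (true, k, d).
Proof.
move=> h1 h2 ne; rewrite /inv /= eq_sym (Ip_ne h1 h2 ne) /=.
by rewrite Ip_opp in h1; rewrite Ip_opp in h2; rewrite (YpI h1) (YpI h2).
Qed.

Lemma extend n x y P s Y d : Uniq n -> PSn n -> Pt n x P y -> inv P s -> size Y = n.+1 ->
  W n.+1 (emb x y s) s.2 Y d ->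
  exists s', emb x y s' = Y /\ s'.2 = d /\ Mstep (Some P) s s' /\ inv P s'.
Proof.
move=> U PS hPt hinv hY; have [hx hy] := Pt_size hPt.
have [z [k [eY hz]]] := rconsP hY; subst Y.
case: s hinv => [[b j] c] /andP [/= njc hYp]; rewrite /emb /=.
rewrite W_rcons; last by []; last by case: (b).
case: ((if b then y else x) =P z) => [ew|nw].
  move=> hI; exists (b, k, d); rewrite /= -ew; split=> //; split=> //.
  rewrite /Mstep eqxx hI; split=> //; rewrite /inv /=.
  have nkd : k != d.
    by apply/eqP => ekd; move: njc; rewrite (HB1 hI (esym ekd)) eqxx.
  rewrite nkd /=; move: hYp; case: (b) => /andP [y1 y2]; exact: HB2 hI njc y1 y2.
case/existsP => Q /andP [/andP [hQ a1] a2].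
case: b hYp nw hQ => /andP [y1 y2] nw hQ.
- have eQ : Q = opp P.
    apply/eqP; apply/negPn/negP => nQ.
    have hP' : Pt n y (opp P) x by rewrite -Pt_opp.
    have nQ' : opp P != Q by rewrite eq_sym.
    exact: (PS y (opp P) Q x z hP' hQ nQ' j c njc y1 y2 (YpI a1) (YpI a2)).
  subst Q.
  have hP2 : Pt n y (opp P) x by rewrite -Pt_opp.
  have ez : z = x by exact: (U y (opp P) z x hQ hP2).
  subst z; exists (false, k, d); split=> //; split=> //; split.
    by rewrite /Mstep /=; rewrite -!Ip_opp in a1 a2; rewrite a1 a2.
  rewrite /inv /=; rewrite -Ip_opp in a1; rewrite -Ip_opp in a2; rewrite (YpI a1) (YpI a2) andbT.
  rewrite andbT; apply/eqP => ekd; subst d; by move: njc; rewrite (Hfun a1 a2) eqxx.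
- have eQ : Q = P.
    apply/eqP; apply/negPn/negP => nQ.
    have nQ' : P != Q by rewrite eq_sym.
    exact: (PS x P Q y z hPt hQ nQ' j c njc y1 y2 (YpI a1) (YpI a2)).
  subst Q.
  have ez : z = y by apply: (U x P) hQ hPt.
  subst z; exists (true, k, d); split=> //; split=> //; split.
    by rewrite /Mstep /= a1 a2.
  by apply: (inv_glue a1 a2); rewrite eq_sym.
Qed.


Lemma extend0 n x j c Y d : size x = n -> size Y = n.+1 -> W n.+1 (rcons x j) c Y d ->
  (exists k, Y = rcons x k /\ Int j c k d) \/
  (exists P y k, Y = rcons y k /\ Pt n x P y /\ Ip P j k /\ Ip P c d).
Proof.
move=> hx hY; have [z [k [eY hz]]] := rconsP hY; subst Y.
rewrite W_rcons //; case: (x =P z) => [ez|_] h.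
  by subst z; left; exists k.
right; case/existsP: h => P /andP [/andP [h1 h2] h3]; by exists P, z, k.
Qed.

Lemma claim_step n : Uniq n -> PSn n -> Claim n -> Claim n.+1.
Proof.
move=> U PS C X0 c0 X1 c1 X2 c2 X3 c3 h1 h2 h3.
have [hX0 hX1] := W_size h1; have [_ hX2] := W_size h2; have [_ hX3] := W_size h3.
have [x0 [j0 [e0 hx0]]] := rconsP hX0; subst X0.
case: (c0 =P j0) => [e|ne].
- subst c0.
  have [x1 [j1 [e1 hx1]]] := rconsP hX1; subst X1.
  have [x2 [j2 [e2 hx2]]] := rconsP hX2; subst X2.
  have [x3 [j3 [e3 hx3]]] := rconsP hX3; subst X3.
  have [ec1 w1] := stepA hx0 hx1 h1; subst c1.
  have [ec2 w2] := stepA hx1 hx2 h2; subst c2.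
  have [ec3 w3] := stepA hx2 hx3 h3; subst c3.
  case: (C _ _ _ _ _ _ _ _ w1 w2 w3) => [[ex ej]|[w|[z [e [wa wb]]]]].
  + by subst; left.
  + by right; left; apply: liftA.
  + by right; right; exists (rcons z e), e; split; apply: liftA.
- have ne' : c0 != j0 by apply/eqP.
  have NE : forall j c k d, Int j c k d -> c != j -> d != k.
    by move=> j c k d hI nc; apply/eqP => ed; move: nc; rewrite (HB1 hI ed) eqxx.
  case: (extend0 hx0 hX1 h1) => [[k1 [e1 i1]]|[P [y [k1 [e1 [hP [a1 b1]]]]]]]; subst X1.
  + have ne1 := NE _ _ _ _ i1 ne'.
    case: (extend0 hx0 hX2 h2) => [[k2 [e2 i2]]|[P [y [k2 [e2 [hP [a2 b2]]]]]]]; subst X2.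
    * have ne2 := NE _ _ _ _ i2 ne1.
      case: (extend0 hx0 hX3 h3) => [[k3 [e3 i3]]|[P [y [k3 [e3 [hP [a3 b3]]]]]]]; subst X3.
      -- have m1 : Mstep None (false, j0, c0) (false, k1, c1) by rewrite /Mstep /=.
         have m2 : Mstep None (false, k1, c1) (false, k2, c2) by rewrite /Mstep /=.
         have m3 : Mstep None (false, k2, c2) (false, k3, c3) by rewrite /Mstep /=.
         exact: (finishN (s0 := (false, j0, c0)) hx0 ne' m1 m2 m3).
      -- have [_ hy] := Pt_size hP.
         have m1 : Mstep (Some P) (false, j0, c0) (false, k1, c1) by rewrite /Mstep /=.
         have m2 : Mstep (Some P) (false, k1, c1) (false, k2, c2) by rewrite /Mstep /=.
         have m3 : Mstep (Some P) (false, k2, c2) (true, k3, c3) by rewrite /Mstep /= a3 b3.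
         exact: (finishS (s0 := (false, j0, c0)) hP ne' m1 m2 m3).
    * have [_ hy] := Pt_size hP.
      have inv2 : inv P (true, k2, c2) by apply: (inv_glue a2 b2 ne1).
      have [s3 [e3 [ec3 [m3 _]]]] := extend U PS hP inv2 hX3 h3.
      have m1 : Mstep (Some P) (false, j0, c0) (false, k1, c1) by rewrite /Mstep /=.
      have m2 : Mstep (Some P) (false, k1, c1) (true, k2, c2) by rewrite /Mstep /= a2 b2.
      rewrite -e3 -ec3.
      exact: (finishS (s0 := (false, j0, c0)) hP ne' m1 m2 m3).
  + have [_ hy] := Pt_size hP.
    have inv1 : inv P (true, k1, c1) by apply: (inv_glue a1 b1 ne').
    have [s2 [e2 [ec2 [m2 inv2]]]] := extend U PS hP inv1 hX2 h2.
    rewrite -e2 -ec2 in h3.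
    have [s3 [e3 [ec3 [m3 _]]]] := extend U PS hP inv2 hX3 h3.
    have m1 : Mstep (Some P) (false, j0, c0) (true, k1, c1) by rewrite /Mstep /= a1 b1.
    rewrite -e3 -ec3.
    exact: (finishS (s0 := (false, j0, c0)) hP ne' m1 m2 m3).
Qed.

Lemma claim_all n : Claim n /\ Uniq n /\ PSn n.
Proof.
elim: n => [|n [C [U PS]]].
  have h0 : forall x P y, Pt 0 x P y = false by move=> x [t []].
  split; last split.
  - by move=> x0 c0 x1 c1 x2 c2 x3 c3 /existsP [P]; rewrite h0.
  - by move=> x P y y'; rewrite h0.
  - by move=> x P Q y z; rewrite h0.
have [U' PS'] := inv_step U PS.
by split; [apply: claim_step | split].
Qed.

Lemma W2_walk n : Claim n -> forall (s : seq S * S) l,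
  path (fun s s' => W n s.1 s.2 s'.1 s'.2) s l -> W2 n s.1 s.2 (last s l).1 (last s l).2.
Proof.
move=> C s l; elim: l s => [|t l IH] s /=; first by move=> _; left.
case/andP => h hl; case: (IH t hl) => [[e1 e2]|[w|[z [e [wa wb]]]]].
- by rewrite -e1 -e2; right; left.
- by right; right; exists t.1, t.2.
- exact: (C _ _ _ _ _ _ _ _ h wa wb).
Qed.


Notation cmp := (compress (S:=S)).

Lemma cmp_cons2 (x y : seq S) t : cmp (x :: y :: t) = if x == y then cmp (y :: t) else x :: cmp (y :: t).
Proof. by []. Qed.

Lemma compress_le (s : seq (seq S)) : size (cmp s) <= size s.
Proof.
elim: s => [|x [|y t] IH] //; rewrite cmp_cons2; case: ifP => _.
  by apply: leq_trans IH _.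
by rewrite [size (x :: _)]/= [size (x :: y :: t)]/=.
Qed.

Lemma compress_eq (s : seq (seq S)) : size (cmp s) = size s ->
  cmp s = s /\ sorted (fun a b => a != b) s.
Proof.
elim: s => [|x [|y t] IH] //.
rewrite cmp_cons2; case: ifP => exy.
  move=> h; have := compress_le (y :: t); rewrite h.
  by rewrite [size (x :: _)]/= [size (y :: t)]/=; lia.
rewrite [size (x :: cmp _)]/= [size (x :: y :: t)]/= => -[h].
have [e h2] := IH h; rewrite e; split=> //.
by rewrite /sorted /= exy; exact: h2.
Qed.

Lemma compress_hl (x : seq S) s : exists s', cmp (x :: s) = x :: s' /\ last x s' = last x s.
Proof.
elim: s x => [|y t IH] x; first by exists [::].
have [s' [e1 e2]] := IH y.
rewrite cmp_cons2 e1; case: (x =P y) => [exy|nxy].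
  subst; by exists s'.
by exists (y :: s'); split.
Qed.

Definition adj' n := adj E ty I n.
Definition EA n (a b : seq S) := a = b \/ adj' n a b.

Lemma adj_size n a b : adj' n a b -> size a = n /\ size b = n.
Proof.
rewrite /adj' /adj /edge; case/orP; case E1: (etype _ _ _ _ _ _) => [t|] //= _;
  have [h1 h2] := et_size E1; by [].
Qed.

Lemma take_rcons_n n (x : seq S) a : size x = n -> take n (rcons x a) = x.
Proof. by move=> h; rewrite -cats1 -h take_size_cat. Qed.

Lemma adj_down n a b : adj' n.+1 a b -> take n a = take n b \/ adj' n (take n a) (take n b).
Proof.
move=> h; have [ha hb] := adj_size h.
have [x [c [ex hx]]] := rconsP ha; have [y [d [ey hy]]] := rconsP hb; subst.
rewrite !take_rcons_n //.
move: h; rewrite /adj' /adj /edge !et_rcons // (eq_sym y x).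
case: (x =P y) => [->|nxy]; first by left.
move=> h; right; move: h; case/orP.
  by case E1: (et _ x y) => [t|] //= _; rewrite /adj' /adj /edge E1.
by case E1: (et _ y x) => [t|] //= _; rewrite /adj' /adj /edge orbT.
Qed.

Lemma EA_proj k n a b : k <= n -> EA n a b -> EA k (take k a) (take k b).
Proof.
elim: n a b => [|n IH] a b hk [->|h]; try by left.
have [ha hb] := adj_size h.
case: (k =P n.+1) => [ek|nk].
  by subst k; rewrite !take_oversize ?ha ?hb //; right.
have hk' : k <= n by rewrite leq_eqVlt in hk; case/orP: hk => [/eqP //|]; rewrite ltnS.
case: (adj_down h) => [e|h'].
  by left; rewrite -(take_takel a hk') e take_takel.
have := IH _ _ hk' (or_intror h'); rewrite !take_takel //.
Qed.

Lemma W_adj n x c y d : W n x c y d -> adj' n x y.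
Proof.
case/existsP => -[t []] /andP [h _]; rewrite /adj' /adj /edge.
  by move: h; rewrite /Pt /= => /eqP ->.
by move: h; rewrite /Pt /= => /eqP ->; rewrite orbT.
Qed.

Variable def : S.
Definition st N (u : seq S) := (take N u, last def u).

Lemma W_of_adj N u u' : size u = N.+1 -> size u' = N.+1 -> take N u != take N u' ->
  adj' N.+1 u u' -> W N (take N u) (last def u) (take N u') (last def u').
Proof.
move=> hu hu'; have [x [a [ex hx]]] := rconsP hu; have [y [b [ey hy]]] := rconsP hu'; subst.
rewrite !take_rcons_n // !last_rcons => nxy.
rewrite /adj' /adj /edge !et_rcons // (eq_sym y x) (negbTE nxy).
case/orP.
  case E1: (et _ x y) => [t|] //; case: ifP => // hI _.
  by apply/existsP; exists (t, true); rewrite /Pt /Ip /= E1 eqxx hI.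
case E1: (et _ y x) => [t|] //; case: ifP => // hI _.
by apply/existsP; exists (t, false); rewrite /Pt /Ip /= E1 eqxx hI.
Qed.

Lemma walk_of N u us : all (fun u => size u == N.+1) (u :: us) -> path (adj' N.+1) u us ->
  path (fun a b => a != b) (take N u) (map (take N) us) ->
  path (fun s s' => W N s.1 s.2 s'.1 s'.2) (st N u) (map (st N) us).
Proof.
elim: us u => [//|u' us IH] u /=.
case/and3P => /eqP h1 /eqP h2 hall /andP [ha hp] /andP [hn hq].
rewrite (W_of_adj h1 h2 hn ha) /=; apply: IH => //.
by rewrite /= h2 eqxx.
Qed.

Lemma nbhd_close w v : 0 < size w -> in_nbhd E ty I w v ->
  exists z, size z = size w /\ EA (size w) w z /\ EA (size w) z v.
Proof.
move=> hw [q [[_ [th [thm hpath hproj [L [N0 hL]]]]] hv]].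
pose N := maxn N0 (size w).
have hmN : size w <= N by apply: leq_maxr.
have hN0 : N0 <= N by apply: leq_maxl.
have Npos : 0 < N by apply: leq_trans hw hmN.
have L1 := hL N hN0; have L2 := hL N.+1 (leqW hN0).
have pN := hpath N Npos; have pN1 := hpath N.+1 (ltn0Sn N).
have prN := hproj N.+1 N Npos (ltnSn N).
move: pN1 prN L2; case eU: (th N.+1) => [|u0 us] //= /andP [hall hpth] prN L2.
have hsz : size (cmp (map (take N) (u0 :: us))) = size (map (take N) (u0 :: us)).
  rewrite /proj in prN; rewrite prN size_map.
  move: pN L1; case: (th N) => [|a r] //= _ L1.
  by rewrite /plen /= in L1 L2; rewrite L1 -L2.
have [ecmp hsort] := compress_eq hsz.
have ethN : th N = map (take N) (u0 :: us) by rewrite -prN /proj ecmp.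
have hwalk := walk_of hall hpth hsort.
have hW2 := W2_walk (claim_all N).1 hwalk.
rewrite last_map /= in hW2.
have hszu : forall u, u \in u0 :: us -> size u = N.+1.
  by move=> u hu; apply/eqP; exact: (allP (hall : all (fun u => size u == N.+1) (u0 :: us)) u hu).
have sz0 : size (take N u0) = N by rewrite size_takel // hszu ?mem_head.
have szl : size (take N (last u0 us)) = N.
  by rewrite size_takel // hszu // mem_last.
have [z [hz [ez1 ez2]]] : exists z, size z = N /\ EA N (take N u0) z /\ EA N z (take N (last u0 us)).
  case: hW2 => [[e1 _]|[h|[z [e [wa wb]]]]].
  - by exists (take N u0); split=> //; split; [left|left].
  - by exists (take N (last u0 us)); split=> //; split; [right; apply: W_adj h|left].
  - have [_ hz] := W_size wa.
    by exists z; split=> //; split; right; [apply: W_adj wa | apply: W_adj wb].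
have hthm : th (size w) = cmp (map (take (size w)) (th N)).
  case: (ltnP (size w) N) => [lt|ge].
    by rewrite -(hproj N (size w) hw lt).
  have eqwN : size w = N by apply/eqP; rewrite eqn_leq hmN ge.
  rewrite eqwN ethN -map_comp.
  have -> : map (take N \o take N) (u0 :: us) = map (take N) (u0 :: us).
    by apply: eq_map => u /=; rewrite take_takel.
  by rewrite ecmp.
rewrite ethN -map_comp thm in hthm.
have [s' [e1 e2]] := compress_hl ((take (size w) \o take N) u0) (map (take (size w) \o take N) us).
rewrite e1 in hthm; case: hthm => ew eq'; subst q.
rewrite last_map in e2.
exists (take (size w) z); split; first by rewrite size_takel // hz.
have ew' : w = take (size w) (take N u0) by rewrite {1}ew.
have ev : v = take (size w) (take N (last u0 us)) by rewrite -hv {1}ew e2.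
split; first by rewrite [X in EA _ X _]ew'; apply: EA_proj hmN ez1.
by rewrite [X in EA _ _ X]ev; apply: EA_proj hmN ez2.
Qed.

Lemma EA_sym n a b : EA n a b -> EA n b a.
Proof. by case=> [->|h]; [left | right; rewrite /adj' /adj orbC]. Qed.

Lemma EA_size n a b : size a = n -> EA n a b -> size b = n.
Proof. by move=> ha [<-|/adj_size []]. Qed.

Lemma dist0 m x : size x = m -> dist_le E ty I m x x 0.
Proof. by move=> hx; exists [::]; rewrite /is_path /= hx eqxx. Qed.

Lemma distS m x y z D : dist_le E ty I m x y D -> EA m y z -> size z = m ->
  dist_le E ty I m x z D.+1.
Proof.
move=> [q [hp [hl hs]]] [<-|h] hz.
  by exists q; split=> //; split=> //; apply: leqW.
exists (rcons q z); split; last by rewrite last_rcons size_rcons ltnS.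
move: hp; rewrite /is_path -rcons_cons all_rcons rcons_path hl hz eqxx /= => /andP [-> ->].
exact: h.
Qed.

Theorem bg : bounded_geometry E ty I.
Proof.
exists 4 => w hw v1 v2 h1 h2.
have [z1 [hz1 [a1 b1]]] := nbhd_close hw h1.
have [z2 [hz2 [a2 b2]]] := nbhd_close hw h2.
have hv1 := EA_size hz1 b1.
have d0 := dist0 hv1.
have d1 := distS d0 (EA_sym b1) hz1.
have d2 := distS d1 (EA_sym a1) erefl.
have d3 := distS d2 a2 hz2.
exact: (distS d3 b2 (EA_size hz2 b2)).
Qed.
End Gen.

Section Checks.
Variables (S T : finType) (E : rel S) (ty : S -> S -> T) (I : T -> rel S).
Variables (sS : seq S) (sT : seq T).

Definition sP : seq (port T) := flatten (map (fun t => [:: (t, true); (t, false)]) sT).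
Definition sM : seq (mstate S) :=
  flatten (map (fun b => flatten (map (fun j => map (fun c => (b, j, c)) sS) sS)) [:: true; false]).

Definition YpC P a := has (fun b => Ip I P a b) sS.
Definition IntC j c k d := has (fun P => IntPt E ty j P k && Ip I P c d) sP.
Definition MstepC (oP : option (port T)) (s s' : mstate S) : bool :=
  let: (b, j, c) := s in let: (b', k, d) := s' in
  if b == b' then IntC j c k d else
  match oP with None => false | Some P => if b then Ip I P k j && Ip I P d c else Ip I P j k && Ip I P c d end.

Definition noYY (P Q : port T) := all (fun u => all (fun v =>
  (u != v) ==> YpC P u ==> YpC P v ==> YpC Q u ==> ~~ YpC Q v) sS) sS.

Definition cHirr := all (fun a => ~~ E a a) sS.
Definition cHfun := all (fun P => all (fun a => all (fun b => all (fun b' =>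
  Ip I P a b ==> Ip I P a b' ==> (b == b')) sS) sS) sS) sP.
Definition cHintU := all (fun j => all (fun P => all (fun k => all (fun k' =>
  IntPt E ty j P k ==> IntPt E ty j P k' ==> (k == k')) sS) sS) sP) sS.
Definition cHmix := all (fun j => all (fun P => all (fun k => all (fun k' =>
  IntPt E ty j P k ==> ~~ Ip I P j k') sS) sS) sP) sS.
Definition cHPS1 := all (fun j => all (fun P => all (fun Q => all (fun k => all (fun k' =>
  IntPt E ty j P k ==> IntPt E ty j Q k' ==> (P != Q) ==> noYY P Q) sS) sS) sP) sP) sS.
Definition cHPS2 := all (fun j => all (fun P => all (fun Q => all (fun k =>
  IntPt E ty j P k ==> YpC Q j ==> noYY P Q) sS) sP) sP) sS.
Definition cHA1 := all (fun j => all (fun k => all (fun d => ~~ IntC j j k d) sS) sS) sS.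
Definition cHB1 := all (fun j => all (fun c => all (fun k => all (fun d =>
  IntC j c k d ==> (d == k) ==> (c == j)) sS) sS) sS) sS.
Definition cHB2 := all (fun j => all (fun c => all (fun k => all (fun d => all (fun R =>
  IntC j c k d ==> (j != c) ==> YpC R j ==> YpC R c ==> YpC R k && YpC R d) sP) sS) sS) sS) sS.

Definition succs oP (s : mstate S) := [seq s' <- sM | MstepC oP s s'].
Definition check3 oP (s0 : mstate S) :=
  all (fun s3 => (s0 == s3) || MstepC oP s0 s3 ||
                 has (fun s => MstepC oP s0 s && MstepC oP s s3) sM)
    (flatten (map (succs oP) (flatten (map (succs oP) (succs oP s0))))).
Definition cHM := all (fun oP => all (fun s0 => (s0.2 != s0.1.2) ==> check3 oP s0) sM)
  (None :: map Some sP).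

Definition cAll := [&& cHirr, cHfun, cHintU, cHmix, cHPS1, cHPS2, cHA1, cHB1, cHB2 & cHM].


Hypothesis hS : forall x, x \in sS.
Hypothesis hT : forall t, t \in sT.

Lemma hP P : P \in sP.
Proof. case: P => t b; apply/flatten_mapP; exists t => //; by case: b; rewrite !inE eqxx ?orbT. Qed.

Lemma hM s : s \in sM.
Proof.
case: s => [[b j] c]; apply/flatten_mapP; exists b; first by case: b.
apply/flatten_mapP; exists j => //; exact: map_f.
Qed.

Lemma YpC_E P a : YpC P a = Yp I P a.
Proof. by apply/hasP/existsP => [[b _ h]|[b h]]; exists b. Qed.

Lemma IntC_E j c k d : IntC j c k d = Int E ty I j c k d.
Proof. by apply/hasP/existsP => [[P _ h]|[P h]]; exists P => //; apply: hP. Qed.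

Lemma MstepC_E oP s s' : MstepC oP s s' = Mstep E ty I oP s s'.
Proof. by case: s s' => [[b j] c] [[b' k] d]; rewrite /MstepC /Mstep IntC_E. Qed.

Lemma noYY_E P Q : noYY P Q -> forall u v, u != v -> Yp I P u -> Yp I P v -> Yp I Q u -> Yp I Q v -> False.
Proof.
move=> h u v nuv a b c d; move/allP: h => /(_ u (hS u)) /allP /(_ v (hS v)).
by rewrite nuv !YpC_E a b c d.
Qed.

Ltac spec h x hx := move/allP: h => /(_ x hx) h.

Lemma checks_ok : cAll ->
  (forall a, ~~ E a a) /\
      (forall P a b b', Ip I P a b -> Ip I P a b' -> b = b') /\
      (forall j P k k', IntPt E ty j P k -> IntPt E ty j P k' -> k = k') /\
      (forall j P k k', IntPt E ty j P k -> Ip I P j k' -> False) /\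
      (forall j P Q k k', IntPt E ty j P k -> IntPt E ty j Q k' -> P != Q ->
         forall u v, u != v -> Yp I P u -> Yp I P v -> Yp I Q u -> Yp I Q v -> False) /\
      (forall j P Q k, IntPt E ty j P k -> Yp I Q j ->
         forall u v, u != v -> Yp I P u -> Yp I P v -> Yp I Q u -> Yp I Q v -> False) /\
      (forall j k d, ~~ Int E ty I j j k d) /\
      (forall j c k d, Int E ty I j c k d -> d = k -> c = j) /\
      (forall j c k d R, Int E ty I j c k d -> j != c -> Yp I R j -> Yp I R c -> Yp I R k && Yp I R d) /\
      (forall oP s0 s1 s2 s3, s0.2 != s0.1.2 -> Mstep E ty I oP s0 s1 -> Mstep E ty I oP s1 s2 ->
         Mstep E ty I oP s2 s3 -> s0 = s3 \/ Mstep E ty I oP s0 s3 \/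
         exists s, Mstep E ty I oP s0 s && Mstep E ty I oP s s3).
Proof.
case/and5P => c1 c2 c3 c4 /and5P [c5 c6 c7 c8 /andP [c9 c10]]; repeat split.
- by move=> a; spec c1 a (hS a).
- move=> P a b b' h1 h2; spec c2 P (hP P); spec c2 a (hS a); spec c2 b (hS b); spec c2 b' (hS b').
  by move: c2; rewrite h1 h2 => /eqP.
- move=> j P k k' h1 h2; spec c3 j (hS j); spec c3 P (hP P); spec c3 k (hS k); spec c3 k' (hS k').
  by move: c3; rewrite h1 h2 => /eqP.
- move=> j P k k' h1 h2; spec c4 j (hS j); spec c4 P (hP P); spec c4 k (hS k); spec c4 k' (hS k').
  by move: c4; rewrite h1 h2.
- move=> j P Q k k' h1 h2 h3; spec c5 j (hS j); spec c5 P (hP P); spec c5 Q (hP Q); spec c5 k (hS k); spec c5 k' (hS k').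
  by apply: noYY_E; move: c5; rewrite h1 h2 h3.
- move=> j P Q k h1 h2; spec c6 j (hS j); spec c6 P (hP P); spec c6 Q (hP Q); spec c6 k (hS k).
  by apply: noYY_E; move: c6; rewrite h1 YpC_E h2.
- move=> j k d; spec c7 j (hS j); spec c7 k (hS k); spec c7 d (hS d); by rewrite -IntC_E.
- move=> j c k d h1 h2; spec c8 j (hS j); spec c8 c (hS c); spec c8 k (hS k); spec c8 d (hS d).
  by move: c8; rewrite IntC_E h1 h2 eqxx => /eqP.
- move=> j c k d R h1 h2 h3 h4; spec c9 j (hS j); spec c9 c (hS c); spec c9 k (hS k); spec c9 d (hS d); spec c9 R (hP R).
  by move: c9; rewrite IntC_E h1 h2 !YpC_E h3 h4.
- move=> oP s0 s1 s2 s3 ne m1 m2 m3.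
  have hoP : oP \in None :: map Some sP by case: (oP) => [P|]; rewrite ?inE //= map_f ?orbT // hP.
  spec c10 oP hoP; spec c10 s0 (hM s0); move: c10; rewrite ne /= => c10.
  have i1 : s1 \in succs oP s0 by rewrite mem_filter MstepC_E m1 hM.
  have i2 : s2 \in flatten (map (succs oP) (succs oP s0)).
    by apply/flatten_mapP; exists s1 => //; rewrite mem_filter MstepC_E m2 hM.
  have i3 : s3 \in flatten (map (succs oP) (flatten (map (succs oP) (succs oP s0)))).
    by apply/flatten_mapP; exists s2 => //; rewrite mem_filter MstepC_E m3 hM.
  move/allP: c10 => /(_ s3 i3); rewrite !MstepC_E.
  case/orP => [/orP [/eqP -> | h] | /hasP [s _ h]]; [by left | by right; left | right; right].
  by exists s; rewrite -!MstepC_E.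
Qed.

End Checks.

Definition sS3 : seq 'I_3 := [:: @Ordinal 3 0 isT; @Ordinal 3 1 isT; @Ordinal 3 2 isT].
Definition sS5 : seq 'I_5 := [:: @Ordinal 5 0 isT; @Ordinal 5 1 isT; @Ordinal 5 2 isT; @Ordinal 5 3 isT; @Ordinal 5 4 isT].


Lemma bg_of (S T : finType) (E : rel S) (ty : S -> S -> T) (I : T -> rel S) (sS : seq S) (sT : seq T) (def : S) :
  (forall x, x \in sS) -> (forall t, t \in sT) -> cAll E ty I sS sT -> bounded_geometry E ty I.
Proof.
move=> hS hT hc.
have [h1 [h2 [h3 [h4 [h5 [h6 [h7 [h8 [h9 h10]]]]]]]]] := checks_ok hS hT hc.
exact: (bg h1 h2 h3 h4 h5 h6 h7 h8 h9 h10 def).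
Qed.

Lemma conn_via (S : finType) (r : rel S) (z : S) : (forall a b, r a b = r b a) ->
  (forall x, connect r x z) -> forall x y, connect r x y.
Proof.
move=> hsym h x y; apply: connect_trans (h x) _.
by rewrite (sym_connect_sym (e := r)).
Qed.

Lemma hS3 (x : 'I_3) : x \in sS3.
Proof. by case: x => [[|[|[|n]]] h]. Qed.
Lemma hS5 (x : 'I_5) : x \in sS5.
Proof. by case: x => [[|[|[|[|[|n]]]]] h]. Qed.

Definition o3 i (h : i < 3) : 'I_3 := Ordinal h.
Definition o5 i (h : i < 5) : 'I_5 := Ordinal h.

Theorem proposition5p9 :
  (is_igs gasketE gasketTy gasketI /\ bounded_geometry gasketE gasketTy gasketI) /\
  (is_igs carpetE carpetTy carpetI /\ bounded_geometry carpetE carpetTy carpetI).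
Proof.
split; split.
- split.
  + by move=> [[|[|[|?]]] ?] [[|[|[|?]]] ?].
  + apply: (conn_via (z := o3 (isT : 0 < 3))); first by move=> a b; rewrite orbC.
    move=> [[|[|[|?]]] h] //.
    * suff -> : Ordinal h = o3 (isT : 0 < 3) by exact: connect0.
      by apply: val_inj.
    * by apply: connect1.
    * by apply: connect1.
  + move=> [[|[|[|?]]] h] //.
    * by exists (o3 (isT : 0 < 3)), (o3 (isT : 1 < 3)).
    * by exists (o3 (isT : 1 < 3)), (o3 (isT : 2 < 3)).
    * by exists (o3 (isT : 0 < 3)), (o3 (isT : 2 < 3)).
  + move=> [[|[|[|?]]] h] //.
    * by exists (o3 (isT : 1 < 3)), (o3 (isT : 0 < 3)).
    * by exists (o3 (isT : 2 < 3)), (o3 (isT : 1 < 3)).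
    * by exists (o3 (isT : 2 < 3)), (o3 (isT : 0 < 3)).
- apply: (bg_of (sS := sS3) (sT := sS3) (o3 (isT : 0 < 3)) hS3 hS3).
  by vm_compute.
- split.
  + by move=> [[|[|[|[|[|?]]]]] ?] [[|[|[|[|[|?]]]]] ?].
  + apply: (conn_via (z := o5 (isT : 0 < 5))); first by move=> a b; rewrite orbC.
    move=> [[|[|[|[|[|?]]]]] h] //.
    * suff -> : Ordinal h = o5 (isT : 0 < 5) by exact: connect0.
      by apply: val_inj.
    * by apply: connect1.
    * apply: (connect_trans (y := o5 (isT : 1 < 5))); by apply: connect1.
    * apply: (connect_trans (y := o5 (isT : 4 < 5))); by apply: connect1.
    * by apply: connect1.
  + move=> [[|[|[|[|[|?]]]]] h] //.
    * by exists (o5 (isT : 0 < 5)), (o5 (isT : 1 < 5)).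
    * by exists (o5 (isT : 1 < 5)), (o5 (isT : 2 < 5)).
    * by exists (o5 (isT : 2 < 5)), (o5 (isT : 3 < 5)).
    * by exists (o5 (isT : 3 < 5)), (o5 (isT : 4 < 5)).
    * by exists (o5 (isT : 4 < 5)), (o5 (isT : 0 < 5)).
  + move=> [[|[|[|[|[|?]]]]] h] //.
    * by exists (o5 (isT : 1 < 5)), (o5 (isT : 0 < 5)).
    * by exists (o5 (isT : 2 < 5)), (o5 (isT : 1 < 5)).
    * by exists (o5 (isT : 3 < 5)), (o5 (isT : 2 < 5)).
    * by exists (o5 (isT : 4 < 5)), (o5 (isT : 3 < 5)).
    * by exists (o5 (isT : 0 < 5)), (o5 (isT : 4 < 5)).
- apply: (bg_of (sS := sS5) (sT := sS5) (o5 (isT : 0 < 5)) hS5 hS5).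
  by vm_compute.
Qed.
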